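(* Let $F$ be a non-trivial subfunctor of the identity functor on the category of groups, and let $G$ be a group. Then there exists a simple group $S$ such that $G\subseteq S$ and $F(S)=S$; in particular $S$ lies in the essential image of $F$.
   Context: A subfunctor $F$ of the identity functor on the category of groups assigns to each group $G$ a subgroup $F(G)\subseteq G$ such that every homomorphism $f:G\to G'$ satisfies $f(F(G))\subseteq F(G')$; $F(f)$ is the restriction of $f$. It is non-trivial if $F(G)\neq 1$ for some group $G$. The essential image of a functor is the class of objects isomorphic to some value of the functor. *)

(* Defs.v *)
(* abstract (possibly infinite) groups, given as types with
   operations and the group axioms; the category of groups is the class of
   all such records (in a fixed universe). *)
Set Implicit Arguments.

Record group := Group {
  carrier :> Type;
  gmul : carrier -> carrier -> carrier;
  ginv : carrier -> carrier;
  gone : carrier;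
  gmulA : forall x y z, gmul x (gmul y z) = gmul (gmul x y) z;
  gmul1l : forall x, gmul gone x = x;
  gmulVl : forall x, gmul (ginv x) x = gone
}.

Arguments gmul {g}.
Arguments ginv {g}.
Arguments gone {g}.

Record hom (G H : group) := Hom {
  hfun :> G -> H;
  hfunM : forall x y, hfun (gmul x y) = gmul (hfun x) (hfun y)
}.

Definition is_subgroup (G : group) (P : G -> Prop) : Prop :=
  P gone /\ (forall x y, P x -> P y -> P (gmul x y)) /\
  (forall x, P x -> P (ginv x)).

Definition is_normal (G : group) (N : G -> Prop) : Prop :=
  @is_subgroup G N /\ forall x g, N x -> N (gmul (ginv g) (gmul x g)).

Definition simple_group (G : group) : Prop :=
  (exists x : G, x <> gone) /\
  forall N : G -> Prop, @is_normal G N ->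
    (forall x, N x -> x = gone) \/ (forall x, N x).

Record subfunctor := Subfunctor {
  sfun : forall G : group, G -> Prop;
  sfun_sub : forall G : group, @is_subgroup G (sfun G);
  sfun_nat : forall (G H : group) (f : hom G H) (x : G),
      sfun G x -> sfun H (f x)
}.

Definition nontrivial_subfunctor (F : subfunctor) : Prop :=
  exists (G : group) (x : G), sfun F G x /\ x <> gone.

(* Main.v *)
Require Import Defs.
From Stdlib Require Import ZArith Lia FunctionalExtensionality ProofIrrelevance
  PropExtensionality ClassicalEpsilon Classical PeanoNat Eqdep_dec Bool.

Lemma mulA {G : group} (x y z : G) : gmul x (gmul y z) = gmul (gmul x y) z.
Proof. apply gmulA. Qed.
Lemma mul1l {G : group} (x : G) : gmul gone x = x.
Proof. apply gmul1l. Qed.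
Lemma mulVl {G : group} (x : G) : gmul (ginv x) x = gone.
Proof. apply gmulVl. Qed.

Lemma mulKl {G : group} (x y : G) : gmul (ginv x) (gmul x y) = y.
Proof. rewrite mulA, mulVl, mul1l; reflexivity. Qed.

Lemma mulVr {G : group} (x : G) : gmul x (ginv x) = gone.
Proof.
  rewrite <- (mul1l (gmul x (ginv x))).
  rewrite <- (mulVl (ginv x)) at 1.
  rewrite <- mulA, (mulA (ginv x) x), mulVl, mul1l, mulVl. reflexivity.
Qed.

Lemma mul1r {G : group} (x : G) : gmul x gone = x.
Proof. rewrite <- (mulVl x), mulA, mulVr, mul1l. reflexivity. Qed.

Lemma mulKr {G : group} (x y : G) : gmul x (gmul (ginv x) y) = y.
Proof. rewrite mulA, mulVr, mul1l; reflexivity. Qed.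

Lemma mul_cancel_l {G : group} (x y z : G) : gmul x y = gmul x z -> y = z.
Proof. intro H. rewrite <- (mulKl x y), H, mulKl. reflexivity. Qed.

Lemma inv_uniq {G : group} (x y : G) : gmul x y = gone -> y = ginv x.
Proof. intro H. apply (mul_cancel_l x). rewrite H, mulVr. reflexivity. Qed.

Lemma inv_inv {G : group} (x : G) : ginv (ginv x) = x.
Proof. symmetry. apply inv_uniq. apply mulVl. Qed.

Lemma inv_mul {G : group} (x y : G) : ginv (gmul x y) = gmul (ginv y) (ginv x).
Proof. symmetry. apply inv_uniq. rewrite <- mulA, (mulA y), mulVr, mul1l, mulVr. reflexivity. Qed.

Lemma inv_one {G : group} : ginv (@gone G) = gone.
Proof. symmetry; apply inv_uniq, mul1l. Qed.

Lemma hom_one {G H : group} (f : hom G H) : f gone = gone.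
Proof.
  apply (mul_cancel_l (f gone)). rewrite <- hfunM, mul1l, mul1r. reflexivity.
Qed.

Lemma hom_inv {G H : group} (f : hom G H) (x : G) : f (ginv x) = ginv (f x).
Proof. apply inv_uniq. rewrite <- hfunM, mulVr, hom_one. reflexivity. Qed.

Definition hcomp (A B C : group) (g : hom B C) (f : hom A B) : hom A C.
Proof.
  refine (@Hom A C (fun x => g (f x)) _).
  intros x y. rewrite !hfunM. reflexivity.
Defined.

Definition conjh (G : group) (g : G) : hom G G.
Proof.
  refine (@Hom G G (fun x => gmul (ginv g) (gmul x g)) _).
  intros x y. rewrite <- !mulA, mulKr. reflexivity.
Defined.

Lemma normal_preimage {A B : group} (f : hom A B) (N : B -> Prop) :
  is_normal _ N -> is_normal _ (fun a => N (f a)).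
Proof.
  intros [[H1 [HM HI]] HC]. split; [split; [|split]|].
  - rewrite hom_one; exact H1.
  - intros x y Hx Hy. rewrite hfunM. auto.
  - intros x Hx. rewrite hom_inv. auto.
  - intros x g Hx. rewrite !hfunM, hom_inv. auto.
Qed.

Record perm (X : Type) := Perm {
  pf : X -> X; pg : X -> X;
  pfg : forall x, pf (pg x) = x;
  pgf : forall x, pg (pf x) = x }.
Arguments Perm {X}.
Arguments pf {X}.
Arguments pg {X}.
Arguments pfg {X}.
Arguments pgf {X}.

Lemma perm_ext {X : Type} (p q : perm X) : (forall x, pf p x = pf q x) -> p = q.
Proof.
  destruct p as [f1 g1 a1 b1], q as [f2 g2 a2 b2]; simpl; intro H.
  assert (Hf : f1 = f2) by (apply functional_extensionality; exact H).
  subst f2.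
  assert (Hg : g1 = g2).
  { apply functional_extensionality; intro x.
    rewrite <- (a2 x) at 1. rewrite b1. reflexivity. }
  subst g2.
  f_equal; apply proof_irrelevance.
Qed.

Definition pmul (X : Type) (p q : perm X) : perm X.
Proof.
  refine (Perm (fun x => pf p (pf q x)) (fun x => pg q (pg p x)) _ _).
  - intro x. rewrite pfg, pfg. reflexivity.
  - intro x. rewrite pgf, pgf. reflexivity.
Defined.

Definition pinv (X : Type) (p : perm X) : perm X :=
  Perm (pg p) (pf p) (pgf p) (pfg p).

Definition pid (X : Type) : perm X :=
  Perm (fun x => x) (fun x => x) (fun x => eq_refl) (fun x => eq_refl).

Definition SymG (X : Type) : group.
Proof.
  refine (@Group (perm X) (@pmul X) (@pinv X) (pid X) _ _ _).
  - intros; apply perm_ext; reflexivity.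
  - intros; apply perm_ext; reflexivity.
  - intros; apply perm_ext; intro; simpl; apply pgf.
Defined.

Definition ProdG (A B : group) : group.
Proof.
  refine (@Group (A * B)%type
    (fun p q => (gmul (fst p) (fst q), gmul (snd p) (snd q)))
    (fun p => (ginv (fst p), ginv (snd p))) (gone, gone) _ _ _).
  - intros [a1 b1] [a2 b2] [a3 b3]; simpl; rewrite !mulA; reflexivity.
  - intros [a b]; simpl; rewrite !mul1l; reflexivity.
  - intros [a b]; simpl; rewrite !mulVl; reflexivity.
Defined.

Definition coset {G : group} (N : G -> Prop) (a : G) : G -> Prop :=
  fun b => N (gmul (ginv a) b).

Definition Qc {G : group} (N : G -> Prop) := {C : G -> Prop | exists a, C = coset N a}.

Definition qpi {G : group} (N : G -> Prop) (a : G) : Qc N :=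
  exist _ (coset N a) (ex_intro _ a eq_refl).

Lemma qpi_eq {G : group} {N : G -> Prop} (HN : is_normal _ N) (a b : G) :
  qpi N a = qpi N b <-> N (gmul (ginv a) b).
Proof.
  destruct HN as [[H1 [HM HI]] HC]. split.
  - intro H. assert (E : coset N a = coset N b) by (apply (f_equal (@proj1_sig _ _) H)).
    change (coset N a b). rewrite E. unfold coset. rewrite mulVl. exact H1.
  - intro H. unfold qpi.
    assert (E : coset N a = coset N b).
    { apply functional_extensionality; intro c. apply propositional_extensionality.
      unfold coset. split; intro Hc.
      + replace (gmul (ginv b) c) with (gmul (ginv (gmul (ginv a) b)) (gmul (ginv a) c)).
        * apply HM; auto.
        * rewrite inv_mul, inv_inv, <- mulA, mulKr. reflexivity.
      + replace (gmul (ginv a) c) with (gmul (gmul (ginv a) b) (gmul (ginv b) c)).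
        * apply HM; auto.
        * rewrite <- mulA, mulKr. reflexivity. }
    revert E. generalize (ex_intro (fun a0 => coset N a = coset N a0) a eq_refl).
    generalize (ex_intro (fun a0 => coset N b = coset N a0) b eq_refl).
    intros e1 e2 E. 
    apply eq_sig_hprop; [intros; apply proof_irrelevance|]. simpl. exact E.
Qed.

Lemma qpi_surj {G : group} {N : G -> Prop} (C : Qc N) : exists a, C = qpi N a.
Proof.
  destruct C as [C [a Ha]]. exists a. subst C.
  apply eq_sig_hprop; [intros; apply proof_irrelevance|]. reflexivity.
Qed.

Definition qrep {G : group} {N : G -> Prop} (C : Qc N) : G :=
  proj1_sig (constructive_indefinite_description _ (qpi_surj C)).

Lemma qrep_spec {G : group} {N : G -> Prop} (C : Qc N) : C = qpi N (qrep C).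
Proof. unfold qrep. destruct (constructive_indefinite_description _ _). simpl. exact e. Qed.

Definition qmul {G : group} {N : G -> Prop} (C D : Qc N) : Qc N :=
  qpi N (gmul (qrep C) (qrep D)).
Definition qinv {G : group} {N : G -> Prop} (C : Qc N) : Qc N :=
  qpi N (ginv (qrep C)).

Lemma qmul_pi {G : group} {N : G -> Prop} (HN : is_normal _ N) (a b : G) :
  qmul (qpi N a) (qpi N b) = qpi N (gmul a b).
Proof.
  unfold qmul. apply qpi_eq; auto.
  pose proof (proj1 (qpi_eq HN _ _) (eq_sym (qrep_spec (qpi N a)))) as Ha.
  pose proof (proj1 (qpi_eq HN _ _) (eq_sym (qrep_spec (qpi N b)))) as Hb.
  set (a' := qrep (qpi N a)) in *. set (b' := qrep (qpi N b)) in *.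
  destruct HN as [[H1 [HM HI]] HC].
  replace (gmul (ginv (gmul a' b')) (gmul a b))
    with (gmul (gmul (ginv b') (gmul (gmul (ginv a') a) b')) (gmul (ginv b') b)).
  - apply HM; auto.
  - rewrite inv_mul. rewrite <- !mulA. f_equal. f_equal. rewrite mulKr. reflexivity.
Qed.

Lemma qinv_pi {G : group} {N : G -> Prop} (HN : is_normal _ N) (a : G) :
  qinv (qpi N a) = qpi N (ginv a).
Proof.
  unfold qinv. apply qpi_eq; auto.
  pose proof (proj1 (qpi_eq HN _ _) (eq_sym (qrep_spec (qpi N a)))) as Ha.
  set (a' := qrep (qpi N a)) in *.
  destruct HN as [[H1 [HM HI]] HC].
  rewrite inv_inv.
  replace (gmul a' (ginv a)) with (gmul (ginv (ginv a')) (gmul (ginv (gmul (ginv a') a)) (ginv a'))).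
  - apply HC. apply HI. exact Ha.
  - rewrite inv_inv, inv_mul, inv_inv. rewrite <- !mulA. rewrite mulVr, mul1r. reflexivity.
Qed.

Definition QuotG {G : group} {N : G -> Prop} (HN : is_normal _ N) : group.
Proof.
  refine (@Group (Qc N) (@qmul G N) (@qinv G N) (qpi N gone) _ _ _).
  - intros x y z.
    destruct (qpi_surj x) as [a ->], (qpi_surj y) as [b ->], (qpi_surj z) as [c ->].
    rewrite !qmul_pi by exact HN. rewrite mulA. reflexivity.
  - intros x. destruct (qpi_surj x) as [a ->]. rewrite qmul_pi, mul1l by exact HN. reflexivity.
  - intros x. destruct (qpi_surj x) as [a ->]. rewrite qinv_pi, qmul_pi, mulVl by exact HN. reflexivity.
Defined.

Definition qhom {G : group} {N : G -> Prop} (HN : is_normal _ N) : hom G (QuotG HN).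
Proof.
  refine (@Hom G (QuotG HN) (qpi N) _).
  intros x y. simpl. rewrite qmul_pi by exact HN. reflexivity.
Defined.

Lemma swindle_alg {G : group} (P : G -> Prop) (HP : is_normal _ P) (s a Gm r gm : G) :
  P s -> gmul s a = gmul Gm s -> gmul a r = gmul r a ->
  gmul Gm r = gmul gm (gmul r Gm) -> P gm.
Proof.
  intros Ps F1 F2 F3. destruct HP as [[H1 [HM HI]] HC].
  assert (E1 : Gm = gmul s (gmul a (ginv s))).
  { rewrite mulA, F1, <- mulA, mulVr, mul1r. reflexivity. }
  assert (E3 : gm = gmul Gm (gmul r (gmul (ginv Gm) (ginv r)))).
  { rewrite mulA, F3, <- !mulA. rewrite (mulA Gm (ginv Gm)), mulVr, mul1l, mulVr, mul1r. reflexivity. }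
  set (c := gmul a (gmul s (gmul (ginv a) (ginv s)))).
  assert (Pc : P c).
  { assert (Q : P (gmul (gmul (ginv (ginv a)) (gmul s (ginv a))) (ginv s)))
      by (apply HM; [apply HC; exact Ps | apply HI; exact Ps]).
    rewrite inv_inv, <- !mulA in Q. exact Q. }
  assert (Pd : P (gmul (ginv c) (gmul (ginv (ginv r)) (gmul c (ginv r))))).
  { apply HM; [apply HI; exact Pc| apply HC; exact Pc]. }
  rewrite inv_inv in Pd.
  replace gm with (gmul (ginv c) (gmul r (gmul c (ginv r)))); [exact Pd|].
  rewrite E3, E1. unfold c.
  rewrite !inv_mul, !inv_inv. rewrite <- !mulA.
  idtac.
  rewrite (mulA r a), <- F2, <- (mulA a r), mulKl. reflexivity.
Qed.

Notation Mt L := (nat -> (carrier L * Z))%type.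
Notation Xof L := (carrier L * Z * (nat -> (carrier L * Z)))%type.

Definition isb {L : group} (a b : L) : bool :=
  if excluded_middle_informative (a = b) then true else false.
Lemma isb_true {L : group} (a b : L) : isb a b = true <-> a = b.
Proof. unfold isb. destruct (excluded_middle_informative (a = b)); split; congruence. Qed.
Lemma isb_refl {L : group} (a : L) : isb a a = true.
Proof. apply isb_true; reflexivity. Qed.
Lemma isb_false {L : group} (a b : L) : a <> b -> isb a b = false.
Proof. intro H. destruct (isb a b) eqn:E; [apply isb_true in E; contradiction|reflexivity]. Qed.

Definition sigp {L : group} (y : L) : perm (Xof L).
Proof.
  refine (Perm (fun p => match p with ((h,n),m) => ((gmul y h, n), m) end)
               (fun p => match p with ((h,n),m) => ((gmul (ginv y) h, n), m) end) _ _).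
  - intros [[h n] m]. rewrite mulKr. reflexivity.
  - intros [[h n] m]. rewrite mulKl. reflexivity.
Defined.

Definition sigh (L : group) : hom L (SymG (Xof L)).
Proof.
  refine (@Hom L (SymG (Xof L)) sigp _).
  intros a b. apply perm_ext. intros [[h n] m]. simpl. rewrite mulA. reflexivity.
Defined.

Lemma sigh_inj (L : group) (a b : L) : sigh L a = sigh L b -> a = b.
Proof.
  intro H. pose proof (f_equal (fun q => pf q ((gone, 0%Z), fun _ => (gone, 0%Z))) H) as E.
  simpl in E. injection E. rewrite !mul1r. auto.
Qed.

Definition cperm {L : group} (Q : L -> Z -> bool) (g : perm (Mt L)) : perm (Xof L).
Proof.
  refine (Perm (fun p => match p with ((h,n),m) => if Q h n then ((h,n), pf g m) else p end)
               (fun p => match p with ((h,n),m) => if Q h n then ((h,n), pg g m) else p end) _ _).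
  - intros [[h n] m]. destruct (Q h n) eqn:E; rewrite ?E, ?pfg; reflexivity.
  - intros [[h n] m]. destruct (Q h n) eqn:E; rewrite ?E, ?pgf; reflexivity.
Defined.

Definition rhop {L : group} (x : L) : perm (Xof L).
Proof.
  refine (Perm (fun p => match p with ((h,n),m) => if isb h x then ((h, (n+1)%Z), m) else p end)
               (fun p => match p with ((h,n),m) => if isb h x then ((h, (n-1)%Z), m) else p end) _ _).
  - intros [[h n] m]. destruct (isb h x) eqn:E; rewrite ?E; f_equal; f_equal; lia.
  - intros [[h n] m]. destruct (isb h x) eqn:E; rewrite ?E; f_equal; f_equal; lia.
Defined.

Definition taup (L : group) : perm (Xof L).
Proof.
  refine (Perm (fun p => match p with ((h,n),m) => ((h, (n+1)%Z), m) end)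
               (fun p => match p with ((h,n),m) => ((h, (n-1)%Z), m) end) _ _).
  - intros [[h n] m]. f_equal; f_equal; lia.
  - intros [[h n] m]. f_equal; f_equal; lia.
Defined.

Definition tl {A : Type} (m : nat -> A) : nat -> A := fun k => m (S k).
Definition cns {A : Type} (a : A) (m : nat -> A) : nat -> A :=
  fun k => match k with 0 => a | S k' => m k' end.

Lemma cns_tl {A : Type} (m : nat -> A) : cns (m 0) (tl m) = m.
Proof. apply functional_extensionality; intros [|k]; reflexivity. Qed.
Lemma tl_cns {A : Type} (a : A) (m : nat -> A) : tl (cns a m) = m.
Proof. reflexivity. Qed.

Definition thf {L : group} (x : L) (p : Xof L) : Xof L :=
  match p with ((h,n),m) =>
    if isb h x && Z.eqb n 0 then ((fst (m 0), (2 * snd (m O) + 1)%Z), tl m)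
    else if Z.odd n then ((x, 0%Z), cns (h, Z.div2 n) m)
    else p end.

Lemma thf_c1 {L : group} (x : L) (m : Mt L) :
  thf x ((x, 0%Z), m) = ((fst (m O), (2 * snd (m O) + 1)%Z), tl m).
Proof. unfold thf. rewrite isb_refl. reflexivity. Qed.

Lemma thf_c2 {L : group} (x h : L) (n : Z) (m : Mt L) : Z.odd n = true ->
  thf x ((h, n), m) = ((x, 0%Z), cns (h, Z.div2 n) m).
Proof.
  intro Ho. unfold thf.
  replace (Z.eqb n 0) with false.
  - rewrite andb_false_r, Ho. reflexivity.
  - symmetry. apply Z.eqb_neq. intro; subst. discriminate.
Qed.

Lemma thf_c3 {L : group} (x h : L) (n : Z) (m : Mt L) :
  isb h x && Z.eqb n 0 = false -> Z.odd n = false ->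
  thf x ((h, n), m) = ((h, n), m).
Proof. intros E1 E2. unfold thf. rewrite E1, E2. reflexivity. Qed.

Lemma div2_odd_eq (k : Z) : Z.div2 (2 * k + 1) = k.
Proof. pose proof (Z.div2_odd (2*k+1)) as D. rewrite Z.odd_odd in D. change (Z.b2z true) with 1%Z in D. lia. Qed.

Lemma odd_div2 (n : Z) : Z.odd n = true -> (2 * Z.div2 n + 1)%Z = n.
Proof. intro Eo. pose proof (Z.div2_odd n) as D. rewrite Eo in D. change (Z.b2z true) with 1%Z in D. lia. Qed.

Lemma thf_inv {L : group} (x : L) (p : Xof L) : thf x (thf x p) = p.
Proof.
  destruct p as [[h n] m].
  destruct (isb h x && Z.eqb n 0) eqn:E1.
  - apply andb_true_iff in E1. destruct E1 as [E1 E2].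
    apply isb_true in E1. apply Z.eqb_eq in E2. subst.
    rewrite thf_c1. rewrite thf_c2 by apply Z.odd_odd.
    rewrite div2_odd_eq. rewrite <- surjective_pairing, cns_tl. reflexivity.
  - destruct (Z.odd n) eqn:Eo.
    + rewrite thf_c2 by exact Eo. rewrite thf_c1. cbn [fst snd cns]. rewrite tl_cns. rewrite odd_div2 by exact Eo. reflexivity.
    + rewrite (thf_c3 x h n m E1 Eo). exact (thf_c3 x h n m E1 Eo).
Qed.

Definition thp {L : group} (x : L) : perm (Xof L) :=
  Perm (thf x) (thf x) (thf_inv x) (thf_inv x).

Definition mhf {L : group} (y : L) (m : Mt L) : Mt L :=
  fun k => match k with 0 => (gmul y (fst (m 0)), snd (m 0)) | S k' => m (S k') end.

Lemma mhf_inv {L : group} (y : L) (m : Mt L) : mhf (ginv y) (mhf y m) = m.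
Proof.
  apply functional_extensionality; intros [|k]; simpl; [|reflexivity].
  rewrite mulKl. destruct (m 0); reflexivity.
Qed.
Lemma mhf_inv' {L : group} (y : L) (m : Mt L) : mhf y (mhf (ginv y) m) = m.
Proof.
  apply functional_extensionality; intros [|k]; simpl; [|reflexivity].
  rewrite mulKr. destruct (m 0); reflexivity.
Qed.

Definition mhp {L : group} (y : L) : perm (Mt L) :=
  Perm (mhf y) (mhf (ginv y)) (mhf_inv' y) (mhf_inv y).

Lemma cperm_pf {L : group} (Q : L -> Z -> bool) (g : perm (Mt L)) h n m :
  pf (cperm Q g) ((h, n), m) = if Q h n then ((h, n), pf g m) else ((h, n), m).
Proof. reflexivity. Qed.

Lemma isb_mul {L : group} (x h : L) : isb (gmul x h) x = isb h gone.
Proof.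
  destruct (isb h gone) eqn:E.
  - apply isb_true in E. subst. rewrite mul1r. apply isb_refl.
  - apply isb_false. intro H.
    rewrite <- (mul1r x) in H at 2. apply mul_cancel_l in H. subst h.
    rewrite isb_refl in E. discriminate.
Qed.

Lemma odd_pred' (n : Z) : Z.odd (n - 1) = negb (Z.odd n).
Proof. rewrite Z.odd_sub. destruct (Z.odd n); reflexivity. Qed.

Lemma step (L : group) (x y : L) (Hx : x <> gone)
  (P : SymG (Xof L) -> Prop) (HP : is_normal _ P) (Px : P (sigh L x)) : P (sigh L y).
Proof.
  set (Gam := cperm (fun h n => isb h x && (0 <=? n)%Z) (mhp y)).
  set (gam := cperm (fun h n => isb h x && (n =? 0)%Z) (mhp y)).
  set (alp := cperm (fun h n => isb h gone && (0 <=? n)%Z) (mhp y)).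
  assert (Pg : P gam).
  { apply (@swindle_alg (SymG (Xof L)) P HP (sigh L x) alp Gam (rhop x) gam); auto.
    - apply perm_ext. intros [[h n] m]. cbn [gmul SymG pmul pf sigh hfun sigp].
      unfold alp, Gam. rewrite !cperm_pf. rewrite isb_mul.
      destruct (isb h gone && (0 <=? n)%Z); reflexivity.
    - apply perm_ext. intros [[h n] m]. cbn [gmul SymG pmul pf rhop].
      unfold alp. destruct (isb h x) eqn:E.
      + apply isb_true in E. subst h. rewrite !cperm_pf. rewrite (isb_false x gone Hx). simpl.
        rewrite isb_refl. reflexivity.
      + rewrite !cperm_pf. destruct (isb h gone && (0 <=? n)%Z); rewrite E; reflexivity.
    - apply perm_ext. intros [[h n] m]. cbn [gmul SymG pmul pf rhop].
      unfold Gam, gam. destruct (isb h x) eqn:E.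
      + rewrite !cperm_pf, E. simpl.
        destruct (Z_lt_le_dec n (-1)) as [H1|H1]; [|destruct (Z.eq_dec n (-1)) as [H2|H2]].
        * replace (0 <=? n)%Z with false by (symmetry; apply Z.leb_gt; lia).
          replace (0 <=? n+1)%Z with false by (symmetry; apply Z.leb_gt; lia).
          rewrite E. simpl. rewrite E.
          replace (n + 1 =? 0)%Z with false by (symmetry; apply Z.eqb_neq; lia). reflexivity.
        * subst n. simpl. repeat (rewrite E; simpl). reflexivity.
        * replace (0 <=? n)%Z with true by (symmetry; apply Z.leb_le; lia).
          replace (0 <=? n+1)%Z with true by (symmetry; apply Z.leb_le; lia).
          simpl. rewrite E.
          replace (n + 1 =? 0)%Z with false by (symmetry; apply Z.eqb_neq; lia). rewrite andb_false_r. reflexivity.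
      + rewrite !cperm_pf, E. simpl. rewrite E. simpl. rewrite E. reflexivity. }
  set (Oo := @gmul (SymG (Xof L)) (thp x) (@gmul (SymG (Xof L)) gam (@ginv (SymG (Xof L)) (thp x)))).
  assert (PO : P Oo).
  { destruct HP as [_ HC]. pose proof (HC gam (@ginv (SymG (Xof L)) (thp x)) Pg) as Q.
    rewrite inv_inv in Q. exact Q. }
  set (Ee := @gmul (SymG (Xof L)) (taup L) (@gmul (SymG (Xof L)) Oo (@ginv (SymG (Xof L)) (taup L)))).
  assert (PE : P Ee).
  { destruct HP as [_ HC]. pose proof (HC Oo (@ginv (SymG (Xof L)) (taup L)) PO) as Q.
    rewrite inv_inv in Q. exact Q. }
  assert (Ospec : forall h n m, pf Oo ((h, n), m) =
            if Z.odd n then ((gmul y h, n), m) else ((h, n), m)).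
  { intros h n m. cbn [Oo gmul SymG pmul pf pinv ginv thp pg].
    destruct (Z.odd n) eqn:Eo.
    - rewrite thf_c2 by exact Eo. unfold gam. rewrite cperm_pf, isb_refl. change (true && (0 =? 0)%Z) with true. cbv beta iota.
      rewrite thf_c1. cbn [mhp pf mhf fst snd]. change (cns (h, Z.div2 n) m O) with (h, Z.div2 n). cbn [fst snd]. rewrite odd_div2 by exact Eo. reflexivity.
    - destruct (isb h x && (n =? 0)%Z) eqn:E1.
      + apply andb_true_iff in E1. destruct E1 as [E1 E2].
        apply isb_true in E1. apply Z.eqb_eq in E2. subst h n.
        rewrite thf_c1. unfold gam. rewrite cperm_pf.
        replace ((2 * snd (m O) + 1) =? 0)%Z with false by (symmetry; apply Z.eqb_neq; lia).
        rewrite andb_false_r. cbv beta iota. rewrite <- (thf_c1 x m). apply thf_inv.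
      + rewrite (thf_c3 x h n m E1 Eo). unfold gam. rewrite cperm_pf, E1.
        apply thf_c3; assumption. }
  replace (sigh L y) with (@gmul (SymG (Xof L)) Ee Oo).
  - destruct HP as [[_ [HM _]] _]. apply HM; assumption.
  - apply perm_ext. intros [[h n] m].
    change (pf (@gmul (SymG (Xof L)) Ee Oo) ((h, n), m)) with (pf Ee (pf Oo ((h, n), m))).
    rewrite Ospec.
    change (pf Ee ((?a, ?b), ?c)) with (pf (taup L) (pf Oo ((a, (b - 1)%Z), c))).
    destruct (Z.odd n) eqn:Eo;
    change (pf Ee ?p) with (pf (taup L) (pf Oo (pf (pinv _ (taup L)) p))); cbn [pinv pf taup pg];
    rewrite Ospec, odd_pred', Eo; cbn [negb sigh hfun sigp pf]; f_equal; f_equal; lia.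
Qed.

Fixpoint Lv (G0 : group) (n : nat) : group :=
  match n with 0 => G0 | S k => SymG (Xof (Lv G0 k)) end.

Definition ev (G0 : group) (n : nat) : hom (Lv G0 n) (Lv G0 (S n)) := sigh (Lv G0 n).

Definition coh (G0 : group) (u : forall K, Lv G0 K) : Prop :=
  exists n0, forall K, n0 <= K -> u (S K) = ev G0 K (u K).

Definition Pc (G0 : group) := {u : forall K, Lv G0 K | coh G0 u}.

Lemma pc_ext (G0 : group) (u v : Pc G0) : (forall K, proj1_sig u K = proj1_sig v K) -> u = v.
Proof.
  intro H. apply eq_sig_hprop; [intros; apply proof_irrelevance|].
  apply functional_extensionality_dep. exact H.
Qed.

Definition pcmul (G0 : group) (u v : Pc G0) : Pc G0.
Proof.
  refine (exist _ (fun K => gmul (proj1_sig u K) (proj1_sig v K)) _).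
  destruct u as [u [n0 Hu]], v as [v [n1 Hv]]. simpl.
  exists (Nat.max n0 n1). intros K HK. rewrite hfunM, Hu, Hv by lia. reflexivity.
Defined.

Definition pcinv (G0 : group) (u : Pc G0) : Pc G0.
Proof.
  refine (exist _ (fun K => ginv (proj1_sig u K)) _).
  destruct u as [u [n0 Hu]]. simpl.
  exists n0. intros K HK. rewrite hom_inv, Hu by lia. reflexivity.
Defined.

Definition pcone (G0 : group) : Pc G0.
Proof.
  refine (exist _ (fun K => gone) _).
  exists 0. intros K HK. rewrite hom_one. reflexivity.
Defined.

Definition PG (G0 : group) : group.
Proof.
  refine (@Group (Pc G0) (@pcmul G0) (@pcinv G0) (pcone G0) _ _ _).
  - intros; apply pc_ext; intro K; simpl; apply mulA.
  - intros; apply pc_ext; intro K; simpl; apply mul1l.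
  - intros; apply pc_ext; intro K; simpl; apply mulVl.
Defined.

Definition Zs (G0 : group) (u : PG G0) : Prop :=
  exists n0, forall K, n0 <= K -> proj1_sig u K = gone.

Lemma Zs_normal (G0 : group) : is_normal _ (Zs G0).
Proof.
  split; [split; [|split]|].
  - exists 0. intros; reflexivity.
  - intros u v [n0 Hu] [n1 Hv]. exists (Nat.max n0 n1). intros K HK. simpl.
    rewrite Hu, Hv by lia. apply mul1l.
  - intros u [n0 Hu]. exists n0. intros K HK. simpl. rewrite Hu by lia. apply inv_one.
  - intros u g [n0 Hu]. exists n0. intros K HK. simpl. rewrite Hu by lia.
    rewrite mul1l. apply mulVl.
Qed.

Definition U (G0 : group) : group := QuotG (Zs_normal G0).

Definition castL (G0 : group) {a b : nat} (p : a = b) (v : Lv G0 a) : Lv G0 b :=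
  eq_rect a (fun k => carrier (Lv G0 k)) v b p.

Fixpoint ext (G0 : group) (M : nat) (c : Lv G0 M) (K : nat) {struct K} : Lv G0 K :=
  match K as K0 return carrier (Lv G0 K0) with
  | 0 => match Nat.eq_dec M 0 with left p => castL G0 p c | right _ => gone end
  | S K' => match Nat.eq_dec M (S K') with
            | left p => castL G0 p c
            | right _ => ev G0 K' (ext G0 M c K') end
  end.

Lemma ext_M (G0 : group) (M : nat) (c : Lv G0 M) : ext G0 M c M = c.
Proof.
  destruct M as [|M]; [reflexivity|].
  change (ext G0 (S M) c (S M)) with (match Nat.eq_dec (S M) (S M) with
     left p => castL G0 p c | right _ => ev G0 M (ext G0 (S M) c M) end).
  destruct (Nat.eq_dec (S M) (S M)) as [p|p]; [|exfalso; apply p; reflexivity].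
  rewrite (UIP_refl_nat _ p). reflexivity.
Qed.



Lemma ext_unfold_S (G0 : group) (M : nat) (c : Lv G0 M) (K : nat) :
  ext G0 M c (S K) = match Nat.eq_dec M (S K) with
     left p => castL G0 p c | right _ => ev G0 K (ext G0 M c K) end.
Proof. reflexivity. Qed.
Lemma ext_unfold_0 (G0 : group) (M : nat) (c : Lv G0 M) :
  ext G0 M c 0 = match Nat.eq_dec M 0 with left p => castL G0 p c | right _ => gone end.
Proof. reflexivity. Qed.

Lemma ext_S (G0 : group) (M : nat) (c : Lv G0 M) (K : nat) : M <= K ->
  ext G0 M c (S K) = ev G0 K (ext G0 M c K).
Proof.
  intro H. rewrite ext_unfold_S. destruct (Nat.eq_dec M (S K)) as [p|p]; [lia|reflexivity].
Qed.

Lemma ext_mul (G0 : group) (M : nat) (a b : Lv G0 M) (K : nat) :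
  ext G0 M (gmul a b) K = gmul (ext G0 M a K) (ext G0 M b K).
Proof.
  induction K as [|K IH].
  - rewrite !ext_unfold_0. destruct (Nat.eq_dec M 0) as [p|p].
    + subst M. reflexivity.
    + symmetry; apply mul1l.
  - rewrite !ext_unfold_S. destruct (Nat.eq_dec M (S K)) as [p|p].
    + subst M. reflexivity.
    + rewrite IH, hfunM. reflexivity.
Qed.

Definition extp (G0 : group) (M : nat) (c : Lv G0 M) : PG G0.
Proof.
  refine (exist _ (ext G0 M c) _).
  exists M. intros K HK. apply ext_S. exact HK.
Defined.

Definition exth (G0 : group) (M : nat) : hom (Lv G0 M) (PG G0).
Proof.
  refine (@Hom (Lv G0 M) (PG G0) (extp G0 M) _).
  intros a b. apply pc_ext. intro K. simpl. apply ext_mul.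
Defined.

Definition ih (G0 : group) (M : nat) : hom (Lv G0 M) (U G0) :=
  @hcomp (Lv G0 M) (PG G0) (U G0) (qhom (Zs_normal G0)) (exth G0 M).

Lemma lift_eq (G0 : group) (u : PG G0) (n0 M : nat)
  (Hu : forall K, n0 <= K -> proj1_sig u (S K) = ev G0 K (proj1_sig u K)) :
  n0 <= M -> ih G0 M (proj1_sig u M) = qpi (Zs G0) u.
Proof.
  intro HM. simpl. apply (qpi_eq (Zs_normal G0)).
  exists M. intros K HK. simpl.
  assert (E : forall j, ext G0 M (proj1_sig u M) (j + M) = proj1_sig u (j + M)).
  { induction j as [|j IH]. - apply ext_M.
    - change (S j + M) with (S (j + M)). rewrite ext_S by lia. rewrite IH. symmetry. apply Hu. lia. }
  replace K with ((K - M) + M) by lia. rewrite E. apply mulVl.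
Qed.

Lemma inv_mul_one {G : group} (a b : G) : gmul (ginv a) b = gone -> a = b.
Proof. intro H. rewrite <- (mulKr a b), H, mul1r. reflexivity. Qed.

Lemma ih0_inj (G0 : group) (a b : G0) : ih G0 0 a = ih G0 0 b -> a = b.
Proof.
  intro H. simpl in H. apply (qpi_eq (Zs_normal G0)) in H.
  destruct H as [n0 Hn]. specialize (Hn n0 (le_n _)). simpl in Hn.
  apply inv_mul_one in Hn.
  assert (E : forall K, ext G0 0 a K = ext G0 0 b K -> a = b).
  { induction K as [|K IH]; intro HK.
    - rewrite !ext_M in HK. exact HK.
    - rewrite !ext_S in HK by lia. apply IH. apply sigh_inj. exact HK. }
  exact (E n0 Hn).
Qed.

Lemma U_simple (G0 : group) (Hnt : exists g : G0, g <> gone) : simple_group (U G0).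
Proof.
  split.
  - destruct Hnt as [g Hg]. exists (ih G0 0 g). intro H.
    apply Hg. apply (ih0_inj G0). rewrite hom_one. exact H.
  - intros Nq HNq.
    destruct (classic (exists z, Nq z /\ z <> gone)) as [[z [Nz Hz]]|Hno].
    + right. intro w.
      destruct (qpi_surj z) as [u ->]. destruct (qpi_surj w) as [v ->].
      destruct (proj2_sig u) as [n0 Hu]. destruct (proj2_sig v) as [n1 Hv].
      set (K := Nat.max n0 n1).
      assert (HuK : proj1_sig u K <> gone).
      { intro E. apply Hz. simpl. apply (qpi_eq (Zs_normal G0)).
        exists K. intros K' HK'. simpl. rewrite mul1r.
        replace K' with ((K' - K) + K) by lia. induction (K' - K) as [|j IH].
        - change (0 + K) with K. rewrite E. apply inv_one.
        - change (S j + K) with (S (j + K)). rewrite Hu by lia.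
          rewrite <- hom_inv, IH. apply hom_one. }
      set (P := fun c : Lv G0 (S K) => Nq (ih G0 (S K) c)).
      assert (HP : is_normal _ P) by (apply normal_preimage; exact HNq).
      pose proof (@step (Lv G0 K) (proj1_sig u K) (proj1_sig v K) HuK P HP) as St.
      change (sigh (Lv G0 K)) with (ev G0 K) in St.
      rewrite <- !Hu, <- !Hv in St by lia.
      unfold P in St.
      rewrite !(lift_eq G0 _ n0 (S K) Hu), !(lift_eq G0 _ n1 (S K) Hv) in St by lia.
      exact (St Nz).
    + left. intros z Nz. apply NNPP. intro Hz. apply Hno. exists z. auto.
Qed.

Definition inlh (A B : group) : hom A (ProdG A B).
Proof.
  refine (@Hom A (ProdG A B) (fun a => (a, gone)) _).
  intros x y. simpl. rewrite mul1l. reflexivity.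
Defined.

Definition inrh (A B : group) : hom B (ProdG A B).
Proof.
  refine (@Hom B (ProdG A B) (fun b => (gone, b)) _).
  intros x y. simpl. rewrite mul1l. reflexivity.
Defined.

Theorem theorem3p4 (F : subfunctor) (HF : nontrivial_subfunctor F) (G : group) :
  exists S : group,
    simple_group S /\
    (exists f : hom G S, forall x y, f x = f y -> x = y) /\
    (forall s : S, sfun F S s).
Proof.
  destruct HF as [H [h0 [Fh0 Hh0]]].
  set (G0 := ProdG G H).
  assert (Hnt : exists g : G0, g <> gone).
  { exists (@gone G, h0). intro E. injection E. auto. }
  pose proof (U_simple G0 Hnt) as Hs.
  exists (U G0). split; [exact Hs|split].
  - exists (@hcomp G (Lv G0 0) (U G0) (ih G0 0) (inlh G H)).
    intros x y E. apply ih0_inj in E. injection E. auto.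
  - set (jr := @hcomp H (Lv G0 0) (U G0) (ih G0 0) (inrh G H)).
    assert (Fj : sfun F (U G0) (jr h0)) by (apply sfun_nat; exact Fh0).
    assert (Nj : jr h0 <> gone).
    { intro E. apply Hh0. rewrite <- (hom_one jr) in E.
      apply ih0_inj in E. injection E. auto. }
    assert (HN : is_normal _ (sfun F (U G0))).
    { split; [apply sfun_sub|]. intros x g Hx.
      exact (sfun_nat F (conjh _ g) x Hx). }
    destruct Hs as [_ Hs]. destruct (Hs _ HN) as [Hl|Hr].
    + exfalso. apply Nj. apply Hl. exact Fj.
    + exact Hr.
Qed.
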